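(* Let $X$ be a $T_0$-space. If $X$ is $S^{\ast}$-well-filtered, then $X$ is weak well-filtered. If moreover $X$ is coherent, then $X$ is $S^{\ast}$-well-filtered if and only if $X$ is weak well-filtered. In particular, every weak well-filtered KC space is $S^{\ast}$-well-filtered.
   Context: All spaces are $T_0$. The specialization order of $X$ is given by $x\le y$ iff $x\in cl(\{y\})$; ${\uparrow}$ is taken with respect to it; a subset is saturated if it is an upper set in the specialization order. $K(X)$ denotes the set of all nonempty compact saturated subsets of $X$; a family in $K(X)$ is filtered if any two members contain a common member. $X$ is weak well-filtered if for every filtered family $\{K_i\mid i\in I\}\subseteq K(X)$ and every nonempty open $U$, $\bigcap_{i\in I}K_i\subseteq U$ implies $K_i\subseteq U$ for some $i$. $X$ is $S^{\ast}$-well-filtered if for every filtered family $\{K_i\mid i\in I\}\subseteq K(X)$, every $G\in K(X)$ and every nonempty open $U$, $\bigcap_{i\in I}K_i\cap G\subseteq U$ implies $K_i\cap G\subseteq U$ for some $i$. $X$ is coherent if the intersection of any two compact saturated subsets is compact. $X$ is KC if every compact subset of $X$ is closed. *)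

(* Defs.v *)
From HB Require Import structures.
From mathcomp Require Import all_boot all_order.
From mathcomp Require Import all_classical all_reals all_analysis.
Set Implicit Arguments. Unset Strict Implicit. Unset Printing Implicit Defensive.
Local Open Scope classical_set_scope.

Section Defs.
Context {T : topologicalType}.

Definition spec_le (x y : T) : Prop := closure [set y] x.

Definition saturated (A : set T) : Prop :=
  forall x y, A x -> spec_le x y -> A y.

Definition inKX (K : set T) : Prop :=
  K !=set0 /\ compact K /\ saturated K.

Definition filtered_KX (F : set (set T)) : Prop :=
  F !=set0 /\ F `<=` inKX /\
  (forall K1 K2, F K1 -> F K2 -> exists2 K3, F K3 & K3 `<=` K1 `&` K2).

Definition weak_well_filtered : Prop :=
  forall (F : set (set T)) (U : set T), filtered_KX F -> open U -> U !=set0 ->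
    \bigcap_(K in F) K `<=` U -> exists2 K, F K & K `<=` U.

Definition Sstar_well_filtered : Prop :=
  forall (F : set (set T)) (G U : set T), filtered_KX F -> inKX G ->
    open U -> U !=set0 ->
    (\bigcap_(K in F) K) `&` G `<=` U -> exists2 K, F K & K `&` G `<=` U.

Definition coherent_space : Prop :=
  forall A B : set T, compact A -> saturated A -> compact B -> saturated B ->
    compact (A `&` B).

Definition KC_space : Prop := forall A : set T, compact A -> closed A.

End Defs.
Arguments weak_well_filtered : clear implicits.
Arguments Sstar_well_filtered : clear implicits.
Arguments coherent_space : clear implicits.
Arguments KC_space : clear implicits.

(* Main.v *)
Require Import Defs.
From mathcomp Require Import all_boot all_order.
From mathcomp Require Import all_classical all_reals all_analysis.
Local Open Scope classical_set_scope.

Lemma part1 (T : topologicalType) : Sstar_well_filtered T -> weak_well_filtered T.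
Proof.
move=> H F U hF oU U0 sub.
have [[K0 FK0] [FKX filt]] := hF.
have [K FK KU] : exists2 K, F K & K `&` K0 `<=` U.
  by apply: H => // [|x [hx _]]; [exact: FKX|exact: sub].
have [K3 FK3 sK3] := filt K K0 FK FK0.
by exists K3 => // x /sK3 /KU.
Qed.

Lemma part2 (T : topologicalType) : coherent_space T ->
  weak_well_filtered T -> Sstar_well_filtered T.
Proof.
move=> coh H F G U hF hG oU U0 sub.
have [[K0 FK0] [FKX filt]] := hF.
case: (pselect (exists2 K, F K & K `&` G = set0)) => [[K FK KG]|nE].
  by exists K => //; rewrite KG; apply: sub0set.
pose F' := [set L | exists2 K, F K & L = K `&` G].
have hF' : filtered_KX F'.
  split; first by exists (K0 `&` G); exists K0.
  split.
    move=> L [K FK ->]; have [_ [cK sK]] := FKX _ FK.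
    have [_ [cG sG]] := hG.
    split; last split.
    - by apply/set0P/eqP => E; apply: nE; exists K.
    - exact: coh.
    - by move=> x y [Kx Gx] xy; split; [exact: sK xy|exact: sG xy].
  move=> L1 L2 [K1 FK1 ->] [K2 FK2 ->].
  have [K3 FK3 s3] := filt K1 K2 FK1 FK2.
  exists (K3 `&` G); first by exists K3.
  by move=> x [/s3 [a b] g].
have [L [K FK ->] LU] : exists2 L, F' L & L `<=` U.
  apply: H => // x hx; apply: sub; split.
    by move=> K FK; have [] := hx (K `&` G) (ex_intro2 _ _ K FK erefl).
  by have [] := hx (K0 `&` G) (ex_intro2 _ _ K0 FK0 erefl).
by exists K.
Qed.

Theorem mainTheorem7 (T : topologicalType) (hT0 : kolmogorov_space T) :
  (Sstar_well_filtered T -> weak_well_filtered T) /\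
  (coherent_space T -> (Sstar_well_filtered T <-> weak_well_filtered T)) /\
  (weak_well_filtered T -> KC_space T -> Sstar_well_filtered T).
Proof.
split; first exact: part1.
split; first by move=> coh; split; [exact: part1|exact: part2].
move=> W KC; apply: part2 => // A B cA _ cB _.
exact: compact_closedI (KC _ cB).
Qed.
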